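(* Let $h$ be a binary function symbol interpreted as associative and idempotent, let $a,b$ be distinct free constants, and let $x$ be a variable. Let $t = h(x,s_1,\ldots,s_n,x)$ with $n\ge 0$ and each $s_i\in\{x,a,b\}$ (an $(x,\{a,b\})$-simple word). Let $\sigma$ be a substitution with $x\sigma = s$, where $s\in\{h(a,b),h(b,a)\}$. Then $t\sigma \approx_{AI} s$.
   Context: Terms are built from a countable set of variables and a set of function symbols with fixed arities; substitutions map variables to terms, are the identity on all but finitely many variables, and are extended homomorphically to terms (written postfix, $t\sigma$). $AI$ denotes the equational theory generated by $h(x,h(y,z)) = h(h(x,y),z)$ and $h(x,x)=x$ for the symbol $h$ (all other symbols are free), and $s\approx_{AI} t$ means $s=t$ holds in every model of these axioms. Because $h$ is associative, $h(u_1,\ldots,u_m)$ for $m\ge 2$ denotes the flattened (any-bracketing) $h$-product of $u_1,\ldots,u_m$, and $h(u)$ denotes $u$. *)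

(* Defs.v *)
From Stdlib Require Import List.
Import ListNotations.

Section Terms.
Variable F : Type.

Inductive term : Type :=
| Var : nat -> term
| App : F -> list term -> term.

Fixpoint wf (arity : F -> nat) (t : term) : Prop :=
  match t with
  | Var _ => True
  | App f args => length args = arity f /\
      (fix wfl (l : list term) : Prop :=
         match l with [] => True | u :: us => wf arity u /\ wfl us end) args
  end.

Fixpoint subst (sigma : nat -> term) (t : term) : term :=
  match t with
  | Var v => sigma v
  | App f args => App f (map (subst sigma) args)
  end.

Definition is_substitution (sigma : nat -> term) : Prop :=
  exists dom : list nat, forall v, ~ In v dom -> sigma v = Var v.

Fixpoint eval (A : Type) (I : F -> list A -> A) (rho : nat -> A) (t : term) : A :=
  match t with
  | Var v => rho v
  | App f args => I f (map (eval A I rho) args)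
  end.

Definition AI_model (h : F) (A : Type) (I : F -> list A -> A) : Prop :=
  (forall x y z : A, I h [x; I h [y; z]] = I h [I h [x; y]; z]) /\
  (forall x : A, I h [x; x] = x).

Definition AI_eq (h : F) (s t : term) : Prop :=
  forall (A : Type) (I : F -> list A -> A) (rho : nat -> A),
    AI_model h A I -> eval A I rho s = eval A I rho t.

(* flattened h-product: hprod h u [u2;...;um] = h(u,u2,...,um), and h(u) = u *)
Fixpoint hprod (h : F) (u : term) (us : list term) : term :=
  match us with
  | [] => u
  | v :: vs => App h [u; hprod h v vs]
  end.

End Terms.

Arguments Var {F}.
Arguments App {F}.
Arguments wf {F}.
Arguments subst {F}.
Arguments is_substitution {F}.
Arguments eval {F}.
Arguments AI_model {F}.
Arguments AI_eq {F}.
Arguments hprod {F}.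

(* Main.v *)
Require Import Defs.
From Stdlib Require Import List.
Import ListNotations.

Section Band.
Variables (A : Type) (m : A -> A -> A).
Hypothesis assoc : forall x y z, m x (m y z) = m (m x y) z.
Hypothesis idem : forall x, m x x = x.
Variables P Q : A.
Definition inT (v : A) := v = m P Q \/ v = m Q (m P Q).

Lemma closP v : inT v -> inT (m P v).
Proof. intros [->| ->]; left.
- rewrite assoc, idem; reflexivity.
- rewrite assoc, idem; reflexivity. Qed.
Lemma closQ v : inT v -> inT (m Q v).
Proof. intros [->| ->]; right; auto.
rewrite assoc, idem; reflexivity. Qed.
Lemma closS v : inT v -> m (m P Q) v = m P Q.
Proof. intros [->| ->]; [apply idem|].
rewrite <- assoc, (assoc Q Q), idem, assoc, idem; reflexivity. Qed.
End Band.

Theorem lemma1 (F : Type) (arity : F -> nat) (h a b : F)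
  (Hh : arity h = 2) (Ha : arity a = 0) (Hb : arity b = 0) (Hab : a <> b)
  (Hha : h <> a) (Hhb : h <> b)
  (x : nat) (ss : list (term F))
  (Hss : forall si, In si ss -> si = Var x \/ si = App a [] \/ si = App b [])
  (s : term F)
  (Hs : s = App h [App a []; App b []] \/ s = App h [App b []; App a []])
  (sigma : nat -> term F) (Hsigma : is_substitution sigma)
  (Hxs : sigma x = s) :
  AI_eq h (subst sigma (hprod h (Var x) (ss ++ [Var x]))) s.
Proof.
  intros T I rho [Has Hid].
  set (m := fun u v => I h [u; v]).
  assert (Hgen : forall P Q, (eval T I rho s = m P Q) ->
     ((eval T I rho (App a []) = P /\ eval T I rho (App b []) = Q) \/
      (eval T I rho (App a []) = Q /\ eval T I rho (App b []) = P)) ->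
     forall l u, (forall si, In si l -> si = Var x \/ si = App a [] \/ si = App b []) ->
       (u = Var x \/ u = App a [] \/ u = App b []) ->
       inT T m P Q (eval T I rho (subst sigma (hprod h u (l ++ [Var x]))))
       /\ (u = Var x -> eval T I rho (subst sigma (hprod h u (l ++ [Var x]))) = m P Q)).
  { intros P Q HS Hab'.
    assert (step : forall u w, (u = Var x \/ u = App a [] \/ u = App b []) ->
       inT T m P Q w -> inT T m P Q (m (eval T I rho (subst sigma u)) w) /\
       (u = Var x -> m (eval T I rho (subst sigma u)) w = m P Q)).
    { assert (assoc : forall x y z, m x (m y z) = m (m x y) z) by exact Has.
      assert (idem : forall x, m x x = x) by exact Hid.
      intros u w Hu Hw. split.
      + destruct Hu as [->|[->| ->]].
        * simpl. rewrite Hxs, HS. left. apply closS; auto.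
        * destruct Hab' as [[E1 E2]|[E1 E2]]; simpl in E1, E2; simpl; rewrite E1;
            [apply closP|apply closQ]; auto.
        * destruct Hab' as [[E1 E2]|[E1 E2]]; simpl in E1, E2; simpl; rewrite E2;
            [apply closQ|apply closP]; auto.
      + intros ->. simpl. rewrite Hxs, HS. apply closS; auto. }
    intro l. induction l as [|v l IH]; intros u Hl Hu.
    - change (inT T m P Q (m (eval T I rho (subst sigma u)) (eval T I rho (sigma x))) /\
        (u = Var x -> m (eval T I rho (subst sigma u)) (eval T I rho (sigma x)) = m P Q)).
      rewrite Hxs, HS. apply step; auto. left; reflexivity.
    - destruct (IH v) as [IH1 _]; [intros; apply Hl; simpl; auto|apply Hl; simpl; auto|].
      change (inT T m P Q (m (eval T I rho (subst sigma u)) (eval T I rho (subst sigma (hprod h v (l ++ [Var x]))))) /\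
        (u = Var x -> m (eval T I rho (subst sigma u)) (eval T I rho (subst sigma (hprod h v (l ++ [Var x])))) = m P Q)).
      apply step; auto. }
  destruct Hs as [Hs|Hs].
  - destruct (Hgen (I a []) (I b [])) with (l := ss) (u := Var x : term F) as [_ H];
      auto. rewrite Hs; reflexivity.
    rewrite H by reflexivity. rewrite Hs; reflexivity.
  - destruct (Hgen (I b []) (I a [])) with (l := ss) (u := Var x : term F) as [_ H];
      auto. rewrite Hs; reflexivity.
    rewrite H by reflexivity. rewrite Hs; reflexivity.
Qed.
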